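(* Let $I=(N,A,V)$ be an instance with three agents $N=\{1,2,3\}$, binary valuations ($V_i(j,a)\in\{0,1\}$) satisfying the no-chore assumption ($V_i(i,a)\ge V_i(j,a)$ for all $i,j,a$). Suppose there is an agent $i\in N$ such that $\Delta_{ij}(a)=0$ for every item $a\in A$ and every $j\in N$. Then $I$ admits an EF1 complete allocation.
   Context: An allocation $\pi=(\pi_1,\pi_2,\pi_3)$ consists of pairwise disjoint bundles (complete if they cover $A$); $\pi(a)$ is the agent receiving $a$; $V_i(j,a)$ is agent $i$'s value when item $a$ goes to $j$; $V_i(\pi)=\sum_{a\text{ assigned in }\pi}V_i(\pi(a),a)$; $\pi^{i\leftrightarrow j}$ swaps bundles of $i$ and $j$. A complete allocation $\pi$ is EF1 if for all $i,j$ there exist $C\subseteq A$ with $|C|\le1$ and the allocation $\lambda$ with $\lambda_\ell=\pi_\ell\setminus C$ for all $\ell$ such that $V_i(\lambda)\ge V_i(\lambda^{i\leftrightarrow j})$. $\Delta_{ij}(a)=V_i(i,a)-V_i(j,a)$. *)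

(* Defs.v *)
From mathcomp Require Import all_boot all_order all_algebra.
Set Implicit Arguments. Unset Strict Implicit. Unset Printing Implicit Defensive.
Import Order.TTheory GRing.Theory Num.Theory.

(* Agents are 'I_3 (agents 1,2,3 ~ 0,1,2); items form a finite type A.
   A valuation V i j a : nat is agent i's value when item a goes to agent j. *)
Definition valuation (A : finType) := 'I_3 -> 'I_3 -> A -> nat.

Definition allocation (A : finType) := 'I_3 -> {set A}.

Definition disjoint_bundles (A : finType) (pi : allocation A) : Prop :=
  forall l m : 'I_3, l != m -> [disjoint pi l & pi m].

Definition complete_alloc (A : finType) (pi : allocation A) : Prop :=
  disjoint_bundles pi /\ (forall a : A, exists l : 'I_3, a \in pi l).

(* V_i(pi) = sum over assigned items a of V_i(pi(a), a)
   (for pairwise disjoint bundles). *)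
Definition val_alloc (A : finType) (V : valuation A) (i : 'I_3)
  (pi : allocation A) : nat :=
  \sum_(l < 3) \sum_(a in pi l) V i l a.

Definition swap_alloc (A : finType) (pi : allocation A) (i j : 'I_3)
  : allocation A := fun l => if l == i then pi j else if l == j then pi i else pi l.

Definition remove_items (A : finType) (pi : allocation A) (C : {set A})
  : allocation A := fun l => pi l :\: C.

Definition EF1 (A : finType) (V : valuation A) (pi : allocation A) : Prop :=
  complete_alloc pi /\
  forall i j : 'I_3, exists C : {set A}, #|C| <= 1 /\
    val_alloc V i (swap_alloc (remove_items pi C) i j)
      <= val_alloc V i (remove_items pi C).

Definition binary_val (A : finType) (V : valuation A) : Prop :=
  forall i j a, V i j a <= 1.

Definition no_chore (A : finType) (V : valuation A) : Prop :=
  forall i j a, V i j a <= V i i a.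

Definition Delta (A : finType) (V : valuation A) (i j : 'I_3) (a : A) : int :=
  (V i i a)%:Z - (V i j a)%:Z.

(* Main.v *)
Require Import Defs.
From mathcomp Require Import all_boot all_order all_algebra.
From mathcomp Require Import zify.


Lemma half_split (A : finType) (T : {set A}) :
  exists S : {set A}, S \subset T /\ #|S| <= #|T :\: S| + 1 /\ #|T :\: S| <= #|S| + 1.
Proof.
move: {2}#|T| (erefl #|T|) => n; elim: n T => [|n IH] T HT.
  exists set0; rewrite sub0set cards0 setD0 HT; by [].
have [x Hx] : exists x, x \in T.
  apply/set0Pn; apply/eqP => E; by rewrite E cards0 in HT.
have HT' : #|T :\ x| = n by move: HT; rewrite (cardsD1 x) Hx; case.
have [S' [HS1 [HS2 HS3]]] := IH _ HT'.
have xS' : x \notin S' by apply/negP => /(subsetP HS1); rewrite !inE eqxx.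
case: (leqP #|S'| #|(T :\ x) :\: S'|) => H.
- exists (x |: S'); split; first by rewrite subUset sub1set Hx (subset_trans HS1) // subsetDl.
  have E : T :\: (x |: S') = (T :\ x) :\: S'.
    by apply/setP => a; rewrite !inE; case: (a == x); case: (a \in S'); case: (a \in T).
  rewrite E cardsU1 xS'. lia.
- exists S'; split; first by rewrite (subset_trans HS1) // subsetDl.
  have E : T :\: S' = x |: ((T :\ x) :\: S').
    apply/setP => a; rewrite !inE; case: (eqVneq a x) => [->|]; rewrite ?eqxx ?Hx ?xS' //=.
  have xn : x \notin (T :\ x) :\: S' by rewrite !inE eqxx /= andbF.
  rewrite E cardsU1 xn. lia.
Qed.

Lemma sum_d (A : finType) (V : valuation A) (X : {set A}) p q :
  binary_val V -> no_chore V ->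
  \sum_(a in X) (V p p a - V p q a) = #|X :&: [set a | V p q a < V p p a]|.
Proof.
move=> Hb Hn; rewrite -sum1_card big_mkcond [RHS]big_mkcond /=.
apply: eq_bigr => a _; rewrite !inE.
have := Hb p p a; have := Hb p q a; have := Hn p q a.
case: (a \in X) => //=; case: (V p p a) => [|[|m]]; case: (V p q a) => [|[|m']] //=.
Qed.

Lemma ef1_cond (A : finType) (V : valuation A) (pi : allocation A) p q :
  no_chore V ->
  \sum_(a in pi q) (V p p a - V p q a) <= \sum_(a in pi p) (V p p a - V p q a) ->
  val_alloc V p (swap_alloc pi p q) <= val_alloc V p pi.
Proof.
move=> Hn H.
case: (eqVneq p q) => [<-|npq].
  apply/eq_leq; rewrite /val_alloc; apply: eq_bigr => l _; rewrite /swap_alloc.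
  by case: (eqVneq l p) => [->|].
rewrite /val_alloc (bigD1 p) //= [X in _ <= X](bigD1 p) //=.
have nqp : q != p by rewrite eq_sym.
rewrite (bigD1 q nqp) /= (bigD1 q nqp) /=.
rewrite /swap_alloc eqxx (negbTE nqp) eqxx.
rewrite [X in _ + (_ + X) <= _](eq_bigr (fun l => \sum_(a in pi l) V p l a)); last first.
  by move=> l /andP[/negbTE -> /negbTE ->].
have E1 : forall X : {set A}, \sum_(a in X) V p p a = \sum_(a in X) (V p p a - V p q a) + \sum_(a in X) V p q a.
  by move=> X; rewrite -big_split /=; apply: eq_bigr => a _; rewrite subnK.
rewrite !E1. lia.
Qed.

Lemma main3 (A : finType) (V : valuation A) (i j k : 'I_3) :
  binary_val V -> no_chore V -> (forall l a, V i i a = V i l a) ->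
  i != j -> i != k -> j != k -> (forall l, l = i \/ l = j \/ l = k) ->
  exists pi : allocation A, complete_alloc pi /\ EF1 V pi.
Proof.
move=> Hb Hn Hi nij nik njk cover.
have [K HK] : exists K : {set A}, K = [set a | V k j a < V k k a] by eexists.
have [J HJ] : exists J : {set A}, J = [set a | V j k a < V j j a] by eexists.
have [S [HS [HS1 HS2]]] := half_split _ (K :&: J).
set T := K :&: J.
have HS' : forall a, a \in S -> (a \in K) && (a \in J).
  by move=> a /(subsetP HS); rewrite inE.
pose pi : allocation A := fun l => if l == j then ~: K :|: S else if l == k then K :\: S else set0.
have pij : pi j = ~: K :|: S by rewrite /pi eqxx.
have pik : pi k = K :\: S by rewrite /pi eq_sym (negbTE njk) eqxx.
have pii : pi i = set0 by rewrite /pi (negbTE nij) (negbTE nik).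
have compl : complete_alloc pi.
  split.
    move=> l m nlm; rewrite -setI_eq0; apply/eqP/setP => a.
    have [El|[El|El]] := cover l; have [Em|[Em|Em]] := cover m; subst l m;
      rewrite ?eqxx in nlm => //; rewrite ?pii ?pij ?pik !inE ?andbF //;
      by case: (a \in K); case: (a \in S).
  move=> a; case Ka: (a \in K); last by exists j; rewrite pij !inE Ka.
  case Sa: (a \in S); first by exists j; rewrite pij !inE Sa orbT.
  by exists k; rewrite pik !inE Sa Ka.
exists pi; split => //; split => // p q.
case: (eqVneq p q) => [<-|npq].
  by exists set0; split; [rewrite cards0 | apply: ef1_cond].
have [Ep|[Ep|Ep]] := cover p; subst p.
- exists set0; split; first by rewrite cards0.
  apply: ef1_cond => //.
  by rewrite big1 // => a _; rewrite (Hi q a) subnn.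
- have [Eq|[Eq|Eq]] := cover q; subst q.
  + exists set0; split; first by rewrite cards0.
    apply: ef1_cond => //. by rewrite /remove_items pii set0D big_set0.
  + by rewrite eqxx in npq.
  + case: (set_0Vmem ((K :\: S) :&: J)) => [E|[x Hx]].
    * exists set0; split; first by rewrite cards0.
      apply: ef1_cond => //; rewrite !sum_d // -HJ /remove_items pik setD0 E cards0 //.
    * exists [set x]; split; first by rewrite cards1.
      apply: ef1_cond => //; rewrite !sum_d // -HJ /remove_items pik pij.
      have xT : x \in T :\: S by move: Hx; rewrite /T !inE; case: (x \in S); case: (x \in K); case: (x \in J).
      have xS : x \notin S by move: Hx; rewrite !inE; case: (x \in S).
      have E : (K :\: S :\: [set x]) :&: J = (T :\: S) :\ x.
        apply/setP => a; rewrite /T !inE.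
        by case: (a \in K); case: (a \in S); case: (a == x); case: (a \in J).
      have L2 : #|S| <= #|((~: K :|: S) :\: [set x]) :&: J|.
        apply: subset_leq_card; apply/subsetP => a aS.
        have := HS' a aS; rewrite !inE aS orbT andbT => /andP[_ ->]; rewrite andbT.
        by apply/eqP => ax; rewrite -ax aS in xS.
      rewrite E; move: HS2; rewrite (cardsD1 x (T :\: S)) xT /=. lia.
- have [Eq|[Eq|Eq]] := cover q; subst q.
  + exists set0; split; first by rewrite cards0.
    apply: ef1_cond => //. by rewrite /remove_items pii set0D big_set0.
  + case: (set_0Vmem S) => [E|[x xS]].
    * exists set0; split; first by rewrite cards0.
      apply: ef1_cond => //; rewrite !sum_d // -HK /remove_items pij E setD0 setU0 setIC setICr cards0 //.
    * exists [set x]; split; first by rewrite cards1.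
      apply: ef1_cond => //; rewrite !sum_d // -HK /remove_items pik pij.
      have L1 : #|((~: K :|: S) :\: [set x]) :&: K| <= #|S :\ x|.
        apply: subset_leq_card; apply/subsetP => a.
        by rewrite !inE; case: (a \in K); case: (a \in S); case: (a == x).
      have L2 : #|T :\: S| <= #|((K :\: S) :\: [set x]) :&: K|.
        apply: subset_leq_card; apply/subsetP => a.
        rewrite /T !inE; case: (eqVneq a x) => [->|]; first by rewrite xS.
        by case: (a \in K); case: (a \in S); case: (a \in J).
      move: HS1 L1 L2; rewrite -/T (cardsD1 x S) xS /=. lia.
  + by rewrite eqxx in npq.
Qed.

Theorem lemma5 (A : finType) (V : valuation A) :
  binary_val V -> no_chore V ->
  (exists i : 'I_3, forall (j : 'I_3) (a : A), Delta V i j a = 0%R) ->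
  exists pi : allocation A, complete_alloc pi /\ EF1 V pi.
Proof.
move=> Hb Hn [i Hd].
have Hi : forall l a, V i i a = V i l a.
  move=> l a; have := Hd l a; rewrite /Delta => /eqP; rewrite GRing.subr_eq0 => /eqP [].
  done.
pose o0 : 'I_3 := @Ordinal 3 0 isT.
pose o1 : 'I_3 := @Ordinal 3 1 isT.
pose o2 : 'I_3 := @Ordinal 3 2 isT.
have cover : forall l : 'I_3, l = o0 \/ l = o1 \/ l = o2.
  by case=> [[|[|[|n]]] Hl] //; [left|right;left|right;right]; apply/val_inj.
have [Ei|[Ei|Ei]] := cover i; subst i.
- by apply: (main3 _ _ o0 o1 o2) => //; rewrite -?Hi0.
- apply: (main3 _ _ o1 o0 o2) => //.
  move=> l; have [->|[->|->]] := cover l; tauto.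
- apply: (main3 _ _ o2 o0 o1) => //.
  move=> l; have [->|[->|->]] := cover l; tauto.
Qed.
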